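(* Let $p\ge 5$ be a prime with $p\equiv 1\pmod 6$, and regard $r$ as an indeterminate. Let $\tilde c_1(r),\tilde c_2(r),\tilde c_3(r)\in\mathbb F_p[r]$ be the coefficients of $x^{2p-2}y^{p-1}z^{p-1}$, $x^{p-1}y^{2p-2}z^{p-1}$ and $x^{p-1}y^{p-1}z^{2p-2}$ in $(x^3z+y^4+ry^2z^2+z^4)^{p-1}$. Then: \begin{enumerate} \item Modulo $p$, $\tilde c_3(r)$ is divisible by $\tilde c_1(r)$. \item The only roots of $\tilde c_2(r)$ (in an algebraic closure of $\mathbb F_p$) are $r=\pm 2$; hence $\tilde c_2(r)\neq 0$ for every other $r$ in an algebraic closure of $\mathbb F_p$. \end{enumerate} *)

(* Defs.v *)
From HB Require Import structures.
From mathcomp Require Import all_boot all_algebra all_field.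
From mathcomp Require Import mpoly.
Set Implicit Arguments. Unset Strict Implicit. Unset Printing Implicit Defensive.
Import GRing.Theory.
Local Open Scope ring_scope.

(* The polynomial  x^3 z + y^4 + r y^2 z^2 + z^4  in three variables x = 'X_0,
   y = 'X_1, z = 'X_2, with coefficients in F_p[r] = {poly 'F_p}
   (r is the indeterminate 'X of {poly 'F_p}). *)
Definition quarticF (p : nat) : {mpoly {poly 'F_p}[3]} :=
  'X_(0 : 'I_3) ^+ 3 * 'X_(2 : 'I_3)
  + 'X_(1 : 'I_3) ^+ 4
  + ('X : {poly 'F_p}) *: ('X_(1 : 'I_3) ^+ 2 * 'X_(2 : 'I_3) ^+ 2)
  + 'X_(2 : 'I_3) ^+ 4.

Definition ctilde (p a b c : nat) : {poly 'F_p} :=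
  (quarticF p ^+ (p - 1)) @_ [multinom [tuple a; b; c]].

Definition ctilde1 (p : nat) := ctilde p (2 * p - 2) (p - 1) (p - 1).
Definition ctilde2 (p : nat) := ctilde p (p - 1) (2 * p - 2) (p - 1).
Definition ctilde3 (p : nat) := ctilde p (p - 1) (p - 1) (2 * p - 2).

(* Main.v *)
Require Import Defs.
From HB Require Import structures.
From mathcomp Require Import all_boot all_algebra all_field.
From mathcomp Require Import mpoly.
From mathcomp Require Import ring zify.
Import GRing.Theory.
Local Open Scope ring_scope.


Definition Wc (M g e : nat) : nat :=
  if (e <= g)%N && ~~ odd (g - e) then ('C(M, e) * 'C(M - e, (g - e)./2))%N else 0%N.

Lemma bin2_shift M e : (e.+2 * e.+1 * 'C(M, e.+2) = (M - e) * (M - e - 1) * 'C(M, e))%N.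
Proof.
have h1 := mul_bin_left M e.+1. have h2 := mul_bin_left M e.
rewrite (mulnC e.+2) -mulnA h1 mulnCA h2.
have -> : (M - e.+1 = M - e - 1)%N by lia.
ring.
Qed.

Lemma bin2_shift2 L j : (0 < j)%N ->
  (L * (L - 1) * 'C(L - 2, j - 1) = j * (L - j) * 'C(L, j))%N.
Proof.
move=> j0.
have h1 := mul_bin_down (L - 1) (j - 1).
have h2 := mul_bin_diag L (j - 1).
have -> : (L - 2 = (L - 1).-1)%N by lia.
rewrite -mulnA h1.
have -> : (L - 1 - (j - 1) = L - j)%N by lia.
rewrite mulnCA.
have -> : (L - 1 = L.-1)%N by lia.
rewrite h2. have -> : (j - 1).+1 = j by lia.
ring.
Qed.

Lemma Wc_rec M g e :
  (4 * (e.+2 * e.+1) * Wc M g e.+2 = (g - e) * (2 * M - g - e) * Wc M g e)%N.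
Proof.
rewrite /Wc.
case: (leqP e.+2 g) => h.
  have he : (e <= g)%N by lia.
  rewrite he /=.
  have -> : odd (g - e.+2) = odd (g - e).
    have -> : (g - e = (g - e.+2).+2)%N by lia. by rewrite /= negbK.
  case: (boolP (odd (g - e))) => /= ho; last first.
    set j := ((g - e)./2)%N.
    have hj : (g - e = j.*2)%N.
      by rewrite /j -[in LHS](odd_double_half (g - e)) (negbTE ho).
    have -> : ((g - e.+2)./2 = j - 1)%N.
      have -> : (g - e.+2 = (j - 1).*2)%N by rewrite doubleB; lia.
      by rewrite doubleK.
    have j0 : (0 < j)%N by lia.
    have -> : (M - e.+2 = (M - e) - 2)%N by lia.
    have E1 := bin2_shift M e.
    have E2 := @bin2_shift2 (M - e) j j0.
    have -> : (2 * M - g - e = 2 * (M - e - j))%N by rewrite -!subnDA; lia.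
    have -> : (g - e = 2 * j)%N by lia.
    rewrite mulnA -(mulnA 4) E1.
    have -> : (4 * ((M - e) * (M - e - 1) * 'C(M, e)) * 'C(M - e - 2, j - 1)
      = 4 * 'C(M, e) * ((M - e) * (M - e - 1) * 'C(M - e - 2, j - 1)))%N by ring.
    rewrite E2. have -> : (M - e - j = M - (e + j))%N by lia. ring.
  by rewrite !muln0.
rewrite muln0.
case: (ltnP g e) => h2; first by rewrite /= muln0.
case: (e =P g) => [->|ne]; first by rewrite subnn !mul0n.
have E : g = e.+1 by lia.
by rewrite E subSn // subnn /= muln0.
Qed.
Lemma Wc0 M g e : [\/ (g < e)%N, (2 * M - g < e)%N | (M < e)%N] -> Wc M g e = 0%N.
Proof.
rewrite /Wc; case: ifP => // /andP[h1 h2] h.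
have := odd_double_half (g - e); rewrite (negbTE h2) add0n => hj.
case: (ltnP M e) => hMe; first by rewrite bin_small ?mul0n.
rewrite (@bin_small (M - e)) ?muln0 //.
case: h => h; lia.
Qed.

Lemma sum_pick n (F : 'I_n -> nat) (j0 : nat) (h : (j0 < n)%N) :
  (forall j : 'I_n, (j : nat) != j0 -> F j = 0%N) -> (\sum_(j < n) F j = F (Ordinal h))%N.
Proof.
move=> H; rewrite (bigD1 (Ordinal h)) //=.
have -> : (\sum_(i < n | i != Ordinal h) F i = 0)%N.
  apply: big1 => j hj; apply: H; apply: contraNneq hj => E; exact/eqP/val_inj.
by rewrite addn0.
Qed.
Arguments sum_pick {n F j0}.

Section Expand.
Variable p : nat.
Local Notation R := {poly 'F_p}.
Local Notation MP := {mpoly R[3]}.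
Definition i0 : 'I_3 := 0. 
Definition i1 : 'I_3 := 1.
Definition i2 : 'I_3 := 2.
Definition mA : 'X_{1..3} := (mnm1 i0 *+ 3 + mnm1 i2)%MM.
Definition mB : 'X_{1..3} := (mnm1 i1 *+ 4)%MM.
Definition mC : 'X_{1..3} := (mnm1 i1 *+ 2 + mnm1 i2 *+ 2)%MM.
Definition mD : 'X_{1..3} := (mnm1 i2 *+ 4)%MM.

Lemma quarticE : quarticF p = 'X_[mA] + (('X : R) *: 'X_[mC] + ('X_[mB] + 'X_[mD])).
Proof.
rewrite /quarticF !mpolyXn -!mpolyXD /mA /mB /mC /mD.
by rewrite -!addrA; congr (_ + _); rewrite addrCA.
Qed.
End Expand.
Section Expand2.
Variable p : nat.
Local Notation R := {poly 'F_p}.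
Local Notation MP := {mpoly R[3]}.

Lemma term_helper (a b c d : 'X_{1..3}) (r : R) N i k j :
  ('X_[a] : MP) ^+ (N - i) * ((r *: 'X_[c]) ^+ (i - k) *
     ('X_[b] ^+ (k - j) * 'X_[d] ^+ j *+ 'C(k, j)) *+ 'C(i, k)) *+ 'C(N, i)
  = (r ^+ (i - k) *+ ('C(N, i) * 'C(i, k) * 'C(k, j))) *:
      'X_[(a *+ (N - i) + c *+ (i - k) + b *+ (k - j) + d *+ j)%MM].
Proof.
rewrite !(@mpolyXD 3 R) -!(@mpolyXn 3 R) exprZn. 
rewrite !mulrnAr -!mulrnA -scalerAl -!scalerAr !mulrA scalerMnl.
by rewrite mulnC (mulnC 'C(i, k)).
Qed.

Definition mon N i k j := (mA *+ (N - i) + mC *+ (i - k) + mB *+ (k - j) + mD *+ j)%MM.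

Lemma expandE N : quarticF p ^+ N = \sum_(i < N.+1) \sum_(k < i.+1) \sum_(j < k.+1)
   ((('X : R) ^+ (i - k) *+ ('C(N, i) * 'C(i, k) * 'C(k, j))) *: ('X_[mon N i k j] : MP)).
Proof.
rewrite quarticE exprDn; apply: eq_bigr => i _.
rewrite exprDn mulr_sumr -sumrMnl.
apply: eq_bigr => k _.
rewrite exprDn mulr_sumr -sumrMnl mulr_sumr -sumrMnl.
apply: eq_bigr => j _.
exact: term_helper.
Qed.

Lemma mcoeff_sumL (I : Type) (r : seq I) (P : pred I) (F : I -> MP) m :
  (\sum_(i <- r | P i) F i)@_m = \sum_(i <- r | P i) (F i)@_m.
Proof. exact: raddf_sum. Qed.

Lemma coef_expand N (T : 'X_{1..3}) e :
  ((quarticF p ^+ N) @_ T)`_e =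
  (\sum_(i < N.+1) \sum_(k < i.+1) \sum_(j < k.+1)
     (((i - k == e) && (mon N i k j == T)) * ('C(N, i) * 'C(i, k) * 'C(k, j))))%:R.
Proof.
rewrite expandE mcoeff_sumL (@coef_sum 'F_p) natr_sum; apply: eq_bigr => i _.
rewrite mcoeff_sumL (@coef_sum 'F_p) natr_sum; apply: eq_bigr => k _.
rewrite mcoeff_sumL (@coef_sum 'F_p) natr_sum; apply: eq_bigr => j _.
rewrite (@mcoeffZ 3 R) (@mcoeffX 3 R) mulr_natr !coefMn coefXn eq_sym.
case: (_ == e); case: (_ == T) => /=; rewrite ?mulr0n ?mul0n ?mulr1n ?mul1n //.
by rewrite mul0rn.
Qed.
End Expand2.

Lemma mon_eqE N i k j a b c :
  (mon N i k j == [multinom [tuple a; b; c]]) =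
  [&& 3 * (N - i) == a, 2 * (i - k) + 4 * (k - j) == b
     & (N - i) + 2 * (i - k) + 4 * j == c]%N.
Proof.
have E : forall t : 'I_3, mon N i k j t =
   if t == i0 then (3 * (N - i))%N else if t == i1 then (2 * (i - k) + 4 * (k - j))%N
   else ((N - i) + 2 * (i - k) + 4 * j)%N.
  move=> t; rewrite /mon /mA /mB /mC /mD !(mnmDE, mulmnE, mnm1E).
  by case: t => -[|[|[|//]]] ht /=; lia.
apply/idP/and3P => [/eqP/mnmP h | [/eqP h0 /eqP h1 /eqP h2]].
  have := h i0; have := h i1; have := h i2.
  by rewrite !E /= !mnm_tnth /= => -> -> ->.
apply/eqP/mnmP => t; rewrite E mnm_tnth.
by case: t => -[|[|[|//]]] ht /=.
Qed.

Lemma sum_collapse N M g e a b c :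
  (M <= N)%N -> (g <= 2 * M)%N -> a = (3 * (N - M))%N -> b = (2 * (2 * M - g))%N ->
  c = (N - M + 2 * g)%N ->
  (\sum_(i < N.+1) \sum_(k < i.+1) \sum_(j < k.+1)
     (((i - k == e) && (mon N i k j == [multinom [tuple a; b; c]]))
        * ('C(N, i) * 'C(i, k) * 'C(k, j))))%N = ('C(N, M) * Wc M g e)%N.
Proof.
move=> hMN hg -> -> ->.
have hM : (M < N.+1)%N by [].
rewrite (sum_pick hM); last first.
  move=> i hiM; apply: big1 => k _; apply: big1 => j _.
  rewrite mon_eqE.
  have -> : (3 * (N - i) == 3 * (N - M))%N = false by apply/eqP; have := ltn_ord i; lia.
  by rewrite andbF.
rewrite /=.
case: (leqP e M) => heM; last first.
  rewrite Wc0 ?muln0; last by apply/or3P; rewrite heM !orbT.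
  apply: big1 => k _; apply: big1 => j _.
  have -> : (M - k == e)%N = false by apply/eqP; have := ltn_ord k; lia.
  by [].
have hk : (M - e < M.+1)%N by lia.
rewrite (sum_pick hk); last first.
  move=> k hkM; apply: big1 => j _.
  have -> : (M - k == e)%N = false by apply/eqP; have := ltn_ord k; lia.
  by [].
rewrite /=.
have -> : (M - (M - e) == e)%N by apply/eqP; lia.
rewrite /=.
have cond : forall j : nat, (j <= M - e)%N ->
  (mon N M (M - e) j == [multinom [tuple 3 * (N - M); 2 * (2 * M - g); N - M + 2 * g]])%N
   = (e + 2 * j == g)%N.
  move=> j hj; rewrite mon_eqE eqxx /=.
  apply/andP/eqP => [[_ /eqP]|E]; first lia.
  by split; apply/eqP; lia.
rewrite /Wc.
case: (boolP ((e <= g)%N && ~~ odd (g - e))) => hc; last first.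
  rewrite muln0; apply: big1 => j _; rewrite cond; last by have := ltn_ord j; lia.
  case: eqP => E; last by rewrite mul0n.
  exfalso; move: hc; rewrite -E; have -> : (e + 2 * j - e = (j.*2))%N by lia.
  by rewrite odd_double leq_addr.
move/andP: hc => [heg ho].
set j0 := ((g - e)./2)%N.
have hj0 : (e + 2 * j0 = g)%N.
  have := odd_double_half (g - e); rewrite (negbTE ho) add0n -/j0; lia.
case: (ltnP j0 (M - e).+1) => h.
  rewrite (sum_pick h); last first.
    move=> j hjj; rewrite cond; last by have := ltn_ord j; lia.
    by have -> : (e + 2 * j == g)%N = false by apply/eqP; lia.
  rewrite /= cond; last by lia.
  by rewrite hj0 eqxx mul1n bin_sub // mulnA.
rewrite (bin_small h) !muln0.
apply: big1 => j _; rewrite cond; last by have := ltn_ord j; lia.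
by have -> : (e + 2 * j == g)%N = false by apply/eqP; have := ltn_ord j; lia.
Qed.

Section ODE.
Variable F : fieldType.
Local Notation P := {poly F}.

Definition qq : P := 'X^2 - (4 : F)%:P.

Definition Lop (a b : F) (y : P) : P :=
  qq * y^`()^`() + a *: ('X * y^`()) + b *: y.

Lemma Lop_coef a b y e :
  (Lop a b y)`_e = ((e * (e - 1))%:R + a * e%:R + b) * y`_e - 4 * (e.+2 * e.+1)%:R * y`_e.+2.
Proof.
rewrite /Lop /qq mulrBl !coefD !coefZ coefN coefXnM coefCM coefXM !coef_deriv.
case: e => [|[|e]] /=; rewrite ?coef_deriv ?subSS ?subn0; ring.
Qed.


Lemma dqq : qq^`() = 'X *+ 2.
Proof. by rewrite /qq derivB derivC subr0 derivXn. Qed.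

Lemma ddqq : qq^`()^`() = 2%:R.
Proof. by rewrite dqq derivMn derivX. Qed.

Lemma qq_pow_deriv n : qq * (qq ^+ n)^`() = qq^`() * qq ^+ n *+ n.
Proof.
rewrite deriv_exp; case: n => [|m]; first by rewrite !mulr0n mulr0.
by rewrite /= exprS; ring.
Qed.

Lemma Lop_pow n a b (u : P) :
  let v := qq^`() * u *+ n + qq * u^`() in
  qq * Lop a b (qq ^+ n * u) =
  qq ^+ n * (qq^`() * v *+ n - qq^`() * v + qq * v^`() + a%:P * ('X * v) + b%:P * (qq * u)).
Proof.
move=> v; set y := qq ^+ n * u.
have H1 : qq * y^`() = qq ^+ n * v.
  rewrite /y derivM mulrDr mulrA qq_pow_deriv /v; ring.
have H2 : qq * (qq * y^`()^`()) = qq ^+ n * (qq^`() * v *+ n - qq^`() * v + qq * v^`()).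
  have D : qq^`() * y^`() + qq * y^`()^`() = (qq ^+ n)^`() * v + qq ^+ n * v^`().
    by rewrite -!derivM H1.
  have -> : qq * (qq * y^`()^`()) = qq * (qq^`() * y^`() + qq * y^`()^`()) - qq^`() * (qq * y^`()) by ring.
  rewrite D H1 mulrDr mulrA qq_pow_deriv; ring.
rewrite /Lop -!mul_polyC.
have -> : qq * (qq * y^`()^`() + a%:P * ('X * y^`()) + b%:P * y) =
   qq * (qq * y^`()^`()) + a%:P * ('X * (qq * y^`())) + b%:P * (qq * y) by ring.
rewrite H2 H1 /y; ring.
Qed.


Lemma qq_neq0 : qq != 0.
Proof. by apply: monic_neq0; apply: monicXnsubC. Qed.

Lemma Lop3 n u : (6 * n + 1)%:R = 0 :> F ->
  Lop (1 - (8 * n)%:R) ((15 * n * n)%:R) (qq ^+ n * u) =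
  qq ^+ n * Lop (1 - (4 * n)%:R) ((3 * n * n)%:R) u.
Proof.
move=> h6; apply: (mulfI qq_neq0); rewrite Lop_pow /=.
rewrite dqq !derivD !derivMn !derivM dqq derivMn derivX.
have h6' : ((6 * n + 1)%:R : P) = 0 by rewrite -polyC_natr h6.
rewrite /Lop -!mul_polyC !polyCB !polyC_natr.
set w := u^`(); set w2 := w^`().
set N := (n%:R : P).
have E : forall Z : P, Z = Z + ((6 * n + 1)%:R : P) * (8%:R * N * u * qq ^+ n).
  by move=> Z; rewrite h6' mul0r addr0.
rewrite [LHS]E /N /qq polyC1; ring.
Qed.

Lemma Lop2 n : (6 * n + 1)%:R = 0 :> F ->
  Lop (1 - (8 * n)%:R) ((12 * n * n)%:R) (qq ^+ n) = 0.
Proof.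
move=> h6; apply: (mulfI qq_neq0); rewrite -[qq ^+ n]mulr1 Lop_pow /= mulr0.
rewrite dqq !derivD !derivMn !derivM dqq derivMn derivX derivC.
have h6' : ((6 * n + 1)%:R : P) = 0 by rewrite -polyC_natr h6.
rewrite -?mul_polyC !polyCB !polyC_natr.
have E : forall Z : P, Z = Z + ((6 * n + 1)%:R : P) * (8%:R * n%:R * qq ^+ n).
  by move=> Z; rewrite h6' mul0r addr0.
rewrite [LHS]E /qq ?polyC1; ring.
Qed.


Lemma rec_unique (al be : nat -> F) d (y z : P) :
  (forall e, al e * y`_e = be e * y`_e.+2) -> (forall e, al e * z`_e = be e * z`_e.+2) ->
  (forall e, (e < d)%N -> al e != 0) -> (size y <= d.+1)%N -> (size z <= d.+1)%N ->
  z`_d *: y = y`_d *: z.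
Proof.
move=> Hy Hz Hal sy sz.
pose w e := z`_d * y`_e - y`_d * z`_e.
suff W : forall t e, (d <= e + t)%N -> w e = 0.
  apply/polyP => e; rewrite !coefZ; apply/eqP; rewrite -subr_eq0; apply/eqP.
  exact: (W d e (leq_addl _ _)).
elim => [|t IH] e.
  rewrite addn0 leq_eqVlt => /orP[/eqP <-|he]; first by rewrite /w mulrC subrr.
  rewrite /w (nth_default _ (leq_trans sy he)) (nth_default _ (leq_trans sz he)).
  by rewrite !mulr0 subrr.
case: (leqP d (e + t)) => h1 h2; first exact: IH.
have he : (e < d)%N by lia.
have := Hal e he; apply: contraNeq => nz.
have w2 : w e.+2 = 0 by apply: IH; lia.
have : al e * w e = be e * w e.+2.
  rewrite /w mulrBr !mulrA ![al e * _]mulrC -!mulrA Hy Hz; ring.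
rewrite w2 mulr0 => /eqP; rewrite mulf_eq0 (negbTE nz) orbF => /eqP ->; by [].
Qed.

Lemma Lop0_rec a b (y : P) : Lop a b y = 0 ->
  forall e, ((e * (e - 1))%:R + a * e%:R + b) * y`_e = 4 * (e.+2 * e.+1)%:R * y`_e.+2.
Proof.
move=> H e; have := congr1 (fun p : P => p`_e) H; rewrite /= Lop_coef coef0.
by move/eqP; rewrite subr_eq0 => /eqP.
Qed.

Lemma rec_Lop0 a b (y : P) :
  (forall e, ((e * (e - 1))%:R + a * e%:R + b) * y`_e = 4 * (e.+2 * e.+1)%:R * y`_e.+2) ->
  Lop a b y = 0.
Proof. by move=> H; apply/polyP => e; rewrite Lop_coef H subrr coef0. Qed.

Lemma natr_e1 (e : nat) : (e * (e - 1))%:R = e%:R * (e%:R - 1) :> F.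
Proof. by case: e => [|e]; rewrite ?mul0r // natrM subSS subn0 -addn1 natrD addrK. Qed.


Lemma WcF M g e : (g <= 2 * M)%N ->
  ((e%:R - g%:R) * (e%:R - (2 * M - g)%:R)) * (Wc M g e)%:R
    = 4 * (e.+2 * e.+1)%:R * (Wc M g e.+2)%:R :> F.
Proof.
move=> hg.
have RF := congr1 (fun x => x%:R : F) (Wc_rec M g e); rewrite /= !natrM in RF.
case: (boolP (Wc M g e == 0%N)) => [/eqP z|nz].
  by rewrite z !mulr0 in RF *; rewrite natrM RF.
have he1 : (e <= g)%N.
  by apply: contraNT nz; rewrite -ltnNge => h; apply/eqP/Wc0/or3P; rewrite h.
have he2 : (e <= 2 * M - g)%N.
  by apply: contraNT nz; rewrite -ltnNge => h; apply/eqP/Wc0/or3P; rewrite h orbT.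
rewrite natrM RF !natrB //; ring.
Qed.

Lemma Lop_W (y : P) K M g a b : (g <= 2 * M)%N ->
  (forall e, y`_e = K * (Wc M g e)%:R) ->
  (forall e : nat, (e * (e - 1))%:R + a * e%:R + b = (e%:R - g%:R) * (e%:R - (2 * M - g)%:R)) ->
  Lop a b y = 0.
Proof.
move=> hg Hy Hab; apply: rec_Lop0 => e; rewrite Hab !Hy.
transitivity (K * (((e%:R - g%:R) * (e%:R - (2 * M - g)%:R)) * (Wc M g e)%:R)); first by ring.
rewrite WcF //; ring.
Qed.

Lemma size_W (y : P) K M g d : (forall e, y`_e = K * (Wc M g e)%:R) ->
  (g <= d)%N \/ (2 * M - g <= d)%N -> (size y <= d.+1)%N.
Proof.
move=> Hy h; apply/leq_sizeP => j hj; rewrite Hy Wc0 ?mulr0 //.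
by apply/or3P; case: h => h; [rewrite (leq_ltn_trans h hj) | rewrite (leq_ltn_trans h hj) orbT].
Qed.

End ODE.

Lemma ctilde_coefE p M g e a b c : (M <= p - 1)%N -> (g <= 2 * M)%N ->
  a = (3 * (p - 1 - M))%N -> b = (2 * (2 * M - g))%N -> c = (p - 1 - M + 2 * g)%N ->
  (ctilde p a b c)`_e = ('C(p - 1, M))%:R * (Wc M g e)%:R.
Proof.
by move=> h1 h2 ha hb hc; rewrite /ctilde coef_expand (@sum_collapse _ M g) // natrM.
Qed.

Lemma fact_ndvd p a : prime p -> (a < p)%N -> ~~ (p %| a`!)%N.
Proof.
move=> hp; elim: a => [|a IH] ha; first by rewrite fact0 dvdn1 neq_ltn prime_gt1 ?orbT.
rewrite factS Euclid_dvdM // negb_or IH ?(ltnW ha) // andbT.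
by rewrite gtnNdvd.
Qed.

Lemma Fp_bin_neq0 p a b : prime p -> (a < p)%N -> (b <= a)%N -> ('C(a, b)%:R : 'F_p) != 0.
Proof.
move=> hp ha hb; rewrite -(dvdn_pcharf (pchar_Fp hp)).
apply/negP => h; move/negP: (@fact_ndvd p a hp ha); apply.
by rewrite -(bin_fact hb) dvdn_mulr.
Qed.

Lemma Fp_sub_neq0 p x y : prime p -> (x < p)%N -> (y < p)%N -> x != y ->
  (x%:R - y%:R : 'F_p) != 0.
Proof.
move=> hp hx hy; apply: contraNneq; move/eqP; rewrite subr_eq0 => /eqP E.
by have := congr1 val E; rewrite /= !val_Fp_nat // !modn_small // => ->.
Qed.

Arguments qq {F}.
Arguments Lop {F}.

Lemma size_qqn (F : fieldType) n : size ((qq : {poly F}) ^+ n) = (2 * n).+1.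
Proof.
have sq : size (qq : {poly F}) = 3%N by rewrite /qq size_XnsubC.
have hn0 : (qq : {poly F}) ^+ n != 0 by rewrite expf_neq0 // qq_neq0.
have := size_exp (qq : {poly F}) n; rewrite sq /=.
by move: hn0; rewrite -size_poly_eq0; case: (size _) => // s _ /= ->; rewrite mulnC.
Qed.

Lemma lead_qqn (F : fieldType) n : ((qq : {poly F}) ^+ n)`_(2 * n) = 1.
Proof.
have := lead_coef_exp (qq : {poly F}) n.
by rewrite /lead_coef size_qqn /= -/(lead_coef qq) /qq lead_coefXnsubC // expr1n.
Qed.

Theorem proposition3p8 (p : nat) (hp : prime p) (hp5 : (5 <= p)%N)
    (hp6 : p = 1 %[mod 6]) :
  (ctilde1 p %| ctilde3 p)%R /\
  (forall (L : closedFieldType) (f : {rmorphism 'F_p -> L}) (x : L),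
      root (map_poly f (ctilde2 p)) x = (x == 2) || (x == -2)).
Proof.
set n := (p %/ 6)%N.
have hpn : p = (6 * n + 1)%N.
  by rewrite /n {1}(divn_eq p 6) hp6 mulnC.
have n1 : (0 < n)%N by lia.
have h6 : ((6 * n + 1)%:R : 'F_p) = 0 by rewrite -hpn pchar_Fp_0.
have hN : (p - 1 = 6 * n)%N by lia.
pose K1 : 'F_p := ('C(p - 1, 2 * n))%:R.
pose K2 : 'F_p := ('C(p - 1, 4 * n))%:R.
have E1 : forall e, (ctilde1 p)`_e = K1 * (Wc (2 * n) n e)%:R.
  by move=> e; apply: ctilde_coefE; lia.
have E2 : forall e, (ctilde2 p)`_e = K2 * (Wc (4 * n) (2 * n) e)%:R.
  by move=> e; apply: ctilde_coefE; lia.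
have E3 : forall e, (ctilde3 p)`_e = K2 * (Wc (4 * n) (5 * n) e)%:R.
  by move=> e; apply: ctilde_coefE; lia.
have K1nz : K1 != 0 by rewrite /K1 Fp_bin_neq0 //; lia.
have K2nz : K2 != 0 by rewrite /K2 Fp_bin_neq0 //; lia.
have neq : forall x y, (x < p)%N -> (y < p)%N -> x != y -> (x%:R - y%:R : 'F_p) != 0.
  by move=> x y hx hy hxy; apply: Fp_sub_neq0.
split.
-
  have L1 : Lop (1 - (4 * n)%:R) ((3 * n * n)%:R) (ctilde1 p) = 0.
    apply: (@Lop_W _ _ K1 (2 * n) n); [lia | exact: E1 |] => e.
    have -> : (2 * (2 * n) - n = 3 * n)%N by lia.
    by rewrite natr_e1 !natrM; ring.
  have L3 : Lop (1 - (8 * n)%:R) ((15 * n * n)%:R) (ctilde3 p) = 0.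
    apply: (@Lop_W _ _ K2 (4 * n) (5 * n)); [lia | exact: E3 |] => e.
    have -> : (2 * (4 * n) - 5 * n = 3 * n)%N by lia.
    by rewrite natr_e1 !natrM; ring.
  set y := qq ^+ n * ctilde1 p.
  have Ly : Lop (1 - (8 * n)%:R) ((15 * n * n)%:R) y = 0.
    by rewrite /y Lop3 // L1 mulr0.
  have al : forall e : nat, ((e * (e - 1))%:R + (1 - (8 * n)%:R) * e%:R + (15 * n * n)%:R : 'F_p)
      = (e%:R - (5 * n)%:R) * (e%:R - (3 * n)%:R).
    by move=> e; rewrite natr_e1 !natrM; ring.
  have c1n : (ctilde1 p)`_n != 0.
    rewrite E1 mulf_neq0 // /Wc leqnn subnn /= bin0 muln1.
    by rewrite Fp_bin_neq0 //; lia.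
  have sc1 : size (ctilde1 p) = n.+1.
    have s1 := @size_W _ _ _ _ _ n E1 (or_introl (leqnn n)).
    by apply/eqP; rewrite eqn_leq s1 /= ltnNge; apply: contra c1n => h; rewrite nth_default.
  have c1nz : ctilde1 p != 0 by rewrite -size_poly_eq0 sc1.
  have sy : size y = (3 * n).+1.
    rewrite /y size_mul ?expf_neq0 ?qq_neq0 // size_qqn sc1; lia.
  have yn : y`_(3 * n) != 0.
    have := lead_coefM (qq ^+ n) (ctilde1 p).
    rewrite /lead_coef -/y sy sc1 /= size_qqn /= lead_qqn mul1r => ->.
    by [].
  have hal : forall e, (e < 3 * n)%N ->
      ((e * (e - 1))%:R + (1 - (8 * n)%:R) * e%:R + (15 * n * n)%:R : 'F_p) != 0.
    move=> e he; rewrite al mulf_neq0 // neq //; lia.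
  have s3 : (2 * (4 * n) - 5 * n <= 3 * n)%N by lia.
  have U := @rec_unique _ _ _ (3 * n) y (ctilde3 p)
     (@Lop0_rec _ _ _ _ Ly) (@Lop0_rec _ _ _ _ L3) hal (eq_leq sy)
     (@size_W _ _ _ _ _ (3 * n) E3 (or_intror s3)).
  have -> : ctilde3 p = ((y`_(3 * n))^-1 * (ctilde3 p)`_(3 * n)) *: y.
    by rewrite -scalerA U scalerA mulVf ?scale1r.
  by rewrite /y scalerAl; apply: dvdp_mull; exact: dvdpp.
-
  have L2 : Lop (1 - (8 * n)%:R) ((12 * n * n)%:R) (ctilde2 p) = 0.
    apply: (@Lop_W _ _ K2 (4 * n) (2 * n)); [lia | exact: E2 |] => e.
    have -> : (2 * (4 * n) - 2 * n = 6 * n)%N by lia.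
    by rewrite natr_e1 !natrM; ring.
  have Lq := @Lop2 _ n h6.
  have al : forall e : nat, ((e * (e - 1))%:R + (1 - (8 * n)%:R) * e%:R + (12 * n * n)%:R : 'F_p)
      = (e%:R - (2 * n)%:R) * (e%:R - (6 * n)%:R).
    by move=> e; rewrite natr_e1 !natrM; ring.
  have hal : forall e, (e < 2 * n)%N ->
      ((e * (e - 1))%:R + (1 - (8 * n)%:R) * e%:R + (12 * n * n)%:R : 'F_p) != 0.
    move=> e he; rewrite al mulf_neq0 // neq //; lia.
  have U := @rec_unique _ _ _ (2 * n) (ctilde2 p) (qq ^+ n)
     (@Lop0_rec _ _ _ _ L2) (@Lop0_rec _ _ _ _ Lq) hal
     (@size_W _ _ _ _ _ (2 * n) E2 (or_introl (leqnn _))) (eq_leq (size_qqn _ n)).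
  rewrite lead_qqn scale1r in U.
  have c2n : (ctilde2 p)`_(2 * n) != 0.
    rewrite E2 mulf_neq0 // /Wc leqnn subnn /= bin0 muln1.
    by rewrite Fp_bin_neq0 //; lia.
  move=> L f x.
  rewrite U map_polyZ rmorphXn /qq rmorphB /= map_polyXn map_polyC /= rmorph_nat.
  rewrite rootE hornerZ horner_exp !hornerE mulf_eq0 fmorph_eq0 (negbTE c2n) /=.
  rewrite expf_eq0 n1 /=.
  have -> : x ^+ 2 - 4%:R = (x - 2) * (x + 2) by ring.
  by rewrite mulf_eq0 subr_eq0 addr_eq0.
Qed.
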